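(* Let $G$, $k\ge 3$, the choice strings, the template strings, $L$ and $d$ be as in the Consensus Patterns construction in the context, and let $s\in\{0,1\}^L$ together with a choice of one length-$L$ substring (match) in each choice string and each template string be a solution of the constructed instance (total Hamming distance at most $d$). Then $s$ and all its matches start with $\mathrm{front\_tag}$.
   Context: Let $G=(V,E)$ be an undirected simple graph with $V=\{v_1,\dots,v_n\}$ and edge set $E=\{e_1,\dots,e_m\}$, and let $k\ge 3$ be an integer. All strings are over $\{0,1\}$. For $1\le p\le n$ let $\mathrm{number}(p)=0^{p-1}10^{n-p}$. Let $\mathrm{front\_tag}=(1^{nk^3}0)^{nk^3}0^{nk^3}$ (length $n^2k^6+2nk^3$). For $1\le i<j\le k$ and an edge $e$ joining $v_r,v_s$ with $r<s$ let $\mathrm{encode}(i,j,e)=(0^n)^{i-1}\,\mathrm{number}(r)\,(0^n)^{j-i-1}\,\mathrm{number}(s)\,(0^n)^{k-j}$ and $\mathrm{block}(i,j,e)=\mathrm{front\_tag}\,\mathrm{encode}(i,j,e)$. The choice string is $c_{i,j}=\mathrm{block}(i,j,e_1)\cdots\mathrm{block}(i,j,e_m)$. There are $\binom{k}{2}-(k-1)$ template strings, each equal to $\mathrm{front\_tag}\,1^{nk}$. Set $L=n^2k^6+2nk^3+nk$ and $d=(\binom{k}{2}-(k-1))nk$. The instance consists of all choice strings and template strings; a solution is a string $s$ of length $L$ and a length-$L$ substring of each input string such that the sum of Hamming distances from $s$ to these substrings is at most $d$. *)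

(* Defs.v *)
(* binary strings are  seq bool  (false = 0, true = 1). *)
From mathcomp Require Import all_boot.
Set Implicit Arguments. Unset Strict Implicit. Unset Printing Implicit Defensive.

(* Vertices are 1, ..., n; an edge {v_r, v_s} with r < s is the pair (r, s).
   The edge set E = [e_1; ...; e_m] is a duplicate-free list of such pairs. *)
Definition simple_graph (n : nat) (E : seq (nat * nat)) : bool :=
  uniq E && all (fun e => (0 < e.1) && (e.1 < e.2) && (e.2 <= n)) E.

Definition zeros (n : nat) : seq bool := nseq n false.

Definition number (n p : nat) : seq bool :=
  zeros p.-1 ++ true :: zeros (n - p).

Definition front_tag (n k : nat) : seq bool :=
  flatten (nseq (n * k ^ 3) (rcons (nseq (n * k ^ 3) true) false))
  ++ zeros (n * k ^ 3).

Definition encode (n k i j : nat) (e : nat * nat) : seq bool :=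
  flatten (nseq (i - 1) (zeros n)) ++ number n e.1 ++
  flatten (nseq (j - i - 1) (zeros n)) ++ number n e.2 ++
  flatten (nseq (k - j) (zeros n)).

Definition block (n k i j : nat) (e : nat * nat) : seq bool :=
  front_tag n k ++ encode n k i j e.

Definition choice_string (n k : nat) (E : seq (nat * nat)) (i j : nat)
  : seq bool := flatten [seq block n k i j e | e <- E].

Definition template (n k : nat) : seq bool := front_tag n k ++ nseq (n * k) true.

Definition num_templates (k : nat) : nat := 'C(k, 2) - (k - 1).

Definition pairs (k : nat) : seq (nat * nat) :=
  [seq (i, j) | i <- iota 1 k, j <- iota i.+1 (k - i)].

Definition Len (n k : nat) : nat := n ^ 2 * k ^ 6 + 2 * n * k ^ 3 + n * k.
Definition dist_bound (n k : nat) : nat := num_templates k * (n * k).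

(* Hamming distance (used on strings of equal length) *)
Definition hamming (s t : seq bool) : nat :=
  count id [seq x.1 != x.2 | x <- zip s t].

(* the length-l substring of w starting at (0-based) position p *)
Definition substr (w : seq bool) (p l : nat) : seq bool := take l (drop p w).

(* Main.v *)
Require Import Defs.
From mathcomp Require Import all_boot zify.
Set Implicit Arguments. Unset Strict Implicit. Unset Printing Implicit Defensive.

Lemma hamming_cons a b u v : hamming (a :: u) (b :: v) = (a != b) + hamming u v.
Proof. by []. Qed.

Lemma hamming_count u v : size u = size v ->
  hamming u v = count (fun x => nth false u x != nth false v x) (iota 0 (size u)).
Proof.
elim: u v => [|a u IH] [|b v] //= [e]; rewrite hamming_cons IH //.
rewrite -(addn0 1) iotaDl count_map; congr (_ + _).
Qed.

Lemma hamming_sum u v : size u = size v ->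
  hamming u v = \sum_(x < size u) (nth false u x != nth false v x).
Proof.
elim: u v => [|a u IH] [|b v] //=; first by rewrite big_ord0.
move=> [e]; by rewrite hamming_cons IH // big_ord_recl.
Qed.

Lemma hamming_lb u v xs : size u = size v -> uniq xs ->
  (forall x, x \in xs -> x < size u /\ nth false u x != nth false v x) ->
  size xs <= hamming u v.
Proof.
move=> e U H; rewrite hamming_count // -size_filter; apply: uniq_leq_size => // x /H [h1 h2].
by rewrite mem_filter h2 mem_iota.
Qed.

Lemma hamming_tri u v w : size u = size v -> size v = size w ->
  hamming u w <= hamming v u + hamming v w.
Proof.
elim: u v w => [|a u IH] [|b v] [|c w] //= [e1] [e2].
rewrite !hamming_cons; have := IH _ _ e1 e2.
by case: a; case: b; case: c => /=; lia.
Qed.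

Lemma hamming_cat u1 u2 v1 v2 : size u1 = size v1 ->
  hamming (u1 ++ u2) (v1 ++ v2) = hamming u1 v1 + hamming u2 v2.
Proof.
elim: u1 v1 => [|a u IH] [|b v] //= [e]; by rewrite !hamming_cons IH // addnA.
Qed.

Lemma hamming0 u v : size u = size v -> hamming u v = 0 -> u = v.
Proof.
elim: u v => [|a u IH] [|b v] //= [e]; rewrite hamming_cons.
case: eqP => [-> /= h|//]; by rewrite (IH _ e h).
Qed.

Lemma t1 (a b c : nat) : a * (b + 1) + c = a * b + a + c.
Proof. nia. Qed.
Lemma size_flatten_nseq (T : Type) m (u : seq T) : size (flatten (nseq m u)) = m * size u.
Proof. elim: m => //= m IH; rewrite size_cat IH mulSn. by []. Qed.

Lemma nth_flatten_unif (T : Type) (x0 : T) (l : seq (seq T)) L y : 0 < L ->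
  all (fun u => size u == L) l ->
  nth x0 (flatten l) y = nth x0 (nth [::] l (y %/ L)) (y %% L).
Proof.
move=> L0; elim: l y => [|u l IH] y /=; first by rewrite !nth_nil.
move=> /andP[/eqP su al]; rewrite nth_cat su.
case: ltnP => hy; first by rewrite divn_small // modn_small.
rewrite IH //; have -> : y = (y - L) + L by rewrite subnK.
rewrite addnK divnDr ?dvdnn // divnn L0 addn1 /= modnDr //.
Qed.

Lemma flatten_nseq_false a n : flatten (nseq a (nseq n false)) = nseq (a * n) false.
Proof. elim: a => //= a IH; by rewrite IH mulSn nseqD. Qed.

Lemma nth_flatten_nseq_cst (T : Type) (x0 : T) m u y : 0 < size u ->
  nth x0 (flatten (nseq m u)) y = if y < m * size u then nth x0 u (y %% size u) else x0.
Proof.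
move=> su; case: ltnP => hy; last by rewrite nth_default // size_flatten_nseq.
rewrite (nth_flatten_unif x0 (L := size u)) //; last by rewrite all_nseq eqxx orbT.
rewrite nth_nseq ltn_divLR // ifT //.
Qed.

Section FT.
Variables n k : nat.
Local Notation N := (n * k ^ 3).

Lemma size_ft : size (front_tag n k) = N * N.+1 + N.
Proof. by rewrite /front_tag size_cat size_flatten_nseq size_rcons size_nseq /zeros size_nseq. Qed.

Lemma nth_ft x : nth false (front_tag n k) x = (x < N * N.+1) && (x %% N.+1 != N).
Proof.
rewrite /front_tag nth_cat size_flatten_nseq size_rcons size_nseq.
case: ltnP => hx /=.
  rewrite nth_flatten_nseq_cst size_rcons size_nseq // hx nth_rcons size_nseq.
  have := ltn_pmod x (ltn0Sn N); rewrite ltnS leq_eqVlt => /orP [/eqP ->|h].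
    by rewrite ltnn eqxx.
  by rewrite h nth_nseq h (ltn_eqF h).
by rewrite /zeros nth_nseq; case: ifP.
Qed.
End FT.
Lemma divn_range a n x : a * n <= x -> x < a * n + n -> x %/ n = a.
Proof.
move=> h1 h2; have n0 : 0 < n by lia.
rewrite -(subnKC h1) divnMDl // divn_small ?addn0 //; lia.
Qed.

Lemma Len_eq n k : Len n k = (n * k ^ 3) * (n * k ^ 3).+1 + n * k ^ 3 + n * k.
Proof. rewrite /Len. nia. Qed.

Lemma size_number n p : 0 < p <= n -> size (Defs.number n p) = n.
Proof. move=> /andP[h1 h2]; rewrite /number /zeros size_cat /= !size_nseq; lia. Qed.

Definition valid_edge n (e : nat * nat) := (0 < e.1) && (e.1 < e.2) && (e.2 <= n).

Lemma size_encode n k i j e : 0 < i -> i < j -> j <= k -> valid_edge n e ->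
  size (encode n k i j e) = n * k.
Proof.
move=> hi hij hjk /andP[/andP[h1 h2] h3]; rewrite /encode /zeros !size_cat !flatten_nseq_false.
  rewrite !size_nseq /= /zeros !size_nseq. nia.
Qed.

Lemma nth_encode n k i j e x : 0 < n -> 0 < i -> i < j -> j <= k -> valid_edge n e ->
  nth false (encode n k i j e) x -> (x %/ n == i.-1) || (x %/ n == j.-1).
Proof.
move=> n0 hi hij hjk /andP[/andP[h1 h2] h3]; rewrite /encode /zeros !flatten_nseq_false.
rewrite nth_cat size_nseq; case: ltnP => x1; first by rewrite nth_nseq if_same.
rewrite nth_cat size_number; last lia.
case: ltnP => x2; first by move=> _; rewrite (@divn_range (i-1)) //; lia.
rewrite nth_cat size_nseq; case: ltnP => x3; first by rewrite nth_nseq if_same.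
rewrite nth_cat size_number; last lia.
case: ltnP => x4; first by move=> _; rewrite (@divn_range (j-1)) ?orbT //; nia.
by rewrite nth_nseq if_same.
Qed.

Section Choice.
Variables (n k : nat) (E : seq (nat * nat)) (i j : nat).
Hypothesis hi : 0 < i.
Hypothesis hij : i < j.
Hypothesis hjk : j <= k.
Hypothesis hE : all (valid_edge n) E.
Hypothesis hn : 0 < n.
Local Notation L := (Len n k).
Local Notation N := (n * k ^ 3).
Local Notation c := (choice_string n k E i j).

Lemma size_block e : valid_edge n e -> size (block n k i j e) = L.
Proof. by move=> ve; rewrite /block size_cat size_ft size_encode // Len_eq. Qed.

Lemma all_blocks : all (fun u => size u == L) [seq block n k i j e | e <- E].
Proof. rewrite all_map; apply/allP => e eE /=; by rewrite size_block // (allP hE). Qed.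

Lemma size_c : size c = size E * L.
Proof.
rewrite /choice_string size_flatten /shape -map_comp.
have -> : [seq (size \o block n k i j) e | e <- E] = nseq (size E) L.
  apply: (@eq_from_nth _ 0); rewrite ?size_map ?size_nseq // => y hy.
  by rewrite nth_nseq hy (nth_map (0,0)) //= size_block // (allP hE) // mem_nth.
elim: (size E) => //= m ->; by rewrite mulSn.
Qed.

Lemma L_pos : 0 < L.
Proof. rewrite Len_eq; have : 0 < n * k by rewrite muln_gt0 hn; lia. lia. Qed.

Lemma nth_c q o : q * L + o < size c -> o < L ->
  nth false c (q * L + o) = nth false (block n k i j (nth (0,0) E q)) o.
Proof.
move=> h ho; rewrite /choice_string (nth_flatten_unif false (L:=L)) ?L_pos ?all_blocks //.
rewrite divnMDl ?L_pos // divn_small // addn0 modnMDl modn_small //.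
have qE : q < size E.
  move: h; rewrite size_c => h; have : q * L < size E * L by lia.
  by rewrite ltn_pmul2r ?L_pos.
by rewrite (nth_map (0,0)).
Qed.

Lemma bit_true q o : q * L + o < size c -> o < N * N.+1 -> o %% N.+1 != N ->
  nth false c (q * L + o) = true.
Proof.
move=> h ho1 ho2; rewrite nth_c //; last by rewrite Len_eq; lia.
by rewrite /block nth_cat size_ft ifT ?nth_ft ?ho1 ?ho2 //; lia.
Qed.

Lemma aligned q : q < size E -> substr c (q * L) L = block n k i j (nth (0,0) E q).
Proof.
move=> qE; have hs : q * L + L <= size c by rewrite size_c; nia.
apply: (@eq_from_nth _ false).
  rewrite /substr size_takel ?size_drop ?size_block ?(allP hE) ?mem_nth //; lia.
move=> x; rewrite /substr size_takel ?size_drop; last lia. move=> hx.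
have hxL : x < L by [].
by rewrite nth_take // nth_drop nth_c //; lia.
Qed.
End Choice.

Lemma mod_add_small a b M : a + b < M -> (a + b) %% M = a + b.
Proof. by move=> h; rewrite modn_small. Qed.

Section Align.
Variables (n k : nat) (E : seq (nat * nat)) (i j p : nat).
Hypothesis hk : 3 <= k.
Hypothesis hi : 0 < i.
Hypothesis hij : i < j.
Hypothesis hjk : j <= k.
Hypothesis hE : all (valid_edge n) E.
Hypothesis hn : 0 < n.
Local Notation L := (Len n k).
Local Notation N := (n * k ^ 3).
Local Notation c := (choice_string n k E i j).
Hypothesis hp : p + L <= size c.

Lemma size_template : size (template n k) = L.
Proof. by rewrite /template size_cat size_ft size_nseq Len_eq. Qed.

Lemma align_lb : p %% L != 0 ->
  N - n * k - 1 <= hamming (substr c p L) (template n k).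
Proof.
move=> r0.
have hLe := Len_eq n k.
have nk3 : 3 <= n * k by rewrite -(mul1n 3) leq_mul.
have NN : N = n * k * (k * k) by rewrite !expnS expn0 muln1 !mulnA.
have N9 : 9 * (n * k) <= N by rewrite NN mulnC leq_mul // (@leq_mul 3 3 k k).
have L0 : 0 < L by rewrite hLe; lia.
set M := N.+1.
set r := p %% L; set q := p %/ L.
have pe : p = q * L + r by rewrite [LHS](divn_eq p L).
have rL : r < L by rewrite ltn_mod.
have sw : size (substr c p L) = L by rewrite /substr size_takel // size_drop; lia.
have mism : forall x, x < N * M + N -> ~~ nth false (front_tag n k) x ->
    nth false c (p + x) -> x < size (substr c p L) /\
    nth false (substr c p L) x != nth false (template n k) x.
  move=> x hx h1 h2; have xL : x < L by lia.
  split; first by rewrite sw.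
  rewrite /substr nth_take // nth_drop h2 /template nth_cat size_ft hx.
  by move: h1; case: (nth _ _ x).
have st : size (substr c p L) = size (template n k) by rewrite sw size_template.
have bt := bit_true hi hij hjk hE hn.
have M0 : 0 < M by [].
have ftz : forall x, x %% M == N -> ~~ nth false (front_tag n k) x.
  by move=> x /eqP e; rewrite nth_ft e eqxx andbF.
have rp : 0 < r by rewrite lt0n.
have NM : N * M = N * N + N by rewrite /M mulnS addnC.
case: (leqP r N) => rN.
  set xs := map (fun t => t * M + N) (iota 0 N.-1).
  have U : uniq xs.
    rewrite map_inj_uniq ?iota_uniq // => a b /addIn /eqP; rewrite eqn_pmul2r //; by move/eqP.
  apply: leq_trans (hamming_lb st U _); first by rewrite size_map size_iota; lia.
  move=> x /mapP [t]; rewrite mem_iota => /andP[_ ht] ->.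
  have tM : t.+2 * M <= N * M by rewrite leq_pmul2r //; lia.
  have xm : (t * M + N) %% M = N by rewrite modnMDl modn_small.
  apply: mism; first by rewrite !mulSn in tM; lia.
    by rewrite ftz // xm.
  have -> : p + (t * M + N) = q * L + (t.+1 * M + r.-1) by rewrite pe mulSn; lia.
  apply: bt.
  - rewrite mulSn in tM; lia.
  - rewrite !mulSn in tM; lia.
  - rewrite modnMDl modn_small; lia.
case: (leqP (L - N) r) => rN2.
  set xs := map (fun t => t.+1 * M + N) (iota 0 N.-1).
  have U : uniq xs.
    rewrite map_inj_uniq ?iota_uniq // => a b /addIn /eqP; rewrite eqn_pmul2r // eqSS; by move/eqP.
  apply: leq_trans (hamming_lb st U _); first by rewrite size_map size_iota; lia.
  move=> x /mapP [t]; rewrite mem_iota => /andP[_ ht] ->.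
  have tM : t.+2 * M <= N * M by rewrite leq_pmul2r //; lia.
  have xm : (t.+1 * M + N) %% M = N by rewrite modnMDl modn_small.
  apply: mism; first by rewrite !mulSn in tM; lia.
    by rewrite ftz // xm.
  have -> : p + (t.+1 * M + N) = q.+1 * L + (t.+1 * M + (N - (L - r))).
    by rewrite pe mulSn; lia.
  apply: bt.
  - rewrite mulSn; rewrite !mulSn in tM; lia.
  - rewrite !mulSn in tM; lia.
  - rewrite modnMDl modn_small; lia.
set b := (r - N) %% M.
have bM : b < M by rewrite ltn_mod.
set z := N * M + n * k + (N - b).
set xs := rem z (iota (N * M + n * k) (N - n * k)).
have U : uniq xs by rewrite rem_uniq ?iota_uniq.
apply: leq_trans (hamming_lb st U _).
  case: (boolP (z \in iota (N * M + n * k) (N - n * k))) => hz.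
    by rewrite /xs size_rem // size_iota; lia.
  by rewrite /xs rem_id // size_iota; lia.
move=> x; rewrite mem_rem_uniq ?iota_uniq // => /andP[/= xz]; rewrite mem_iota => /andP[x1 x2].
apply: mism; first lia.
  by rewrite nth_ft ltnNge (_ : N * M <= x) //; lia.
have -> : p + x = q.+1 * L + ((r - N) + (x - (N * M + n * k))) by rewrite pe mulSn; lia.
apply: bt.
- lia.
- lia.
rewrite -modnDml -/b.
case: (ltnP (b + (x - (N * M + n * k))) M) => hb.
  rewrite modn_small //; apply/eqP => e; move: xz; rewrite /z; lia.
have -> : b + (x - (N * M + n * k)) = (b + (x - (N * M + n * k)) - M) + M by lia.
rewrite modnDr modn_small; lia.
Qed.
End Align.

Lemma sum_const_seq (I : Type) (r : seq I) c : \sum_(i <- r) c = size r * c.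
Proof. elim: r => [|a r IH]; by rewrite ?big_nil ?big_cons ?IH ?mulSn. Qed.

Lemma sum_const_ord m c : \sum_(t < m) c = m * c.
Proof. by rewrite big_const_ord iter_addn_0 mulnC. Qed.

Lemma sum_count (I : Type) (r : seq I) (P : pred I) : \sum_(i <- r) (P i : nat) = count P r.
Proof. elim: r => [|a r IH]; by rewrite ?big_nil ?big_cons ?IH. Qed.

Lemma count_sub_in (I : eqType) (a b : pred I) s :
  {in s, forall x, a x -> b x} -> count a s <= count b s.
Proof.
elim: s => //= x s IH h; rewrite leq_add //; last by apply: IH => y ys; apply: h; rewrite inE ys orbT.
by case ax: (a x) => //; rewrite (h x) // inE eqxx.
Qed.

Lemma binS2 k : 'C(k.+1, 2) = 'C(k, 2) + k.
Proof. by rewrite binS bin1. Qed.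

Lemma bin2_le k : 'C(k, 2) + k <= k * k.
Proof. elim: k => // k IH; rewrite binS2; nia. Qed.

Lemma bin2_ge k : 2 * k <= 'C(k, 2) + 3.
Proof. elim: k => // k IH; rewrite binS2; lia. Qed.

Lemma mem_pairs k ij : ij \in pairs k -> [/\ 0 < ij.1, ij.1 < ij.2 & ij.2 <= k].
Proof.
move=> /allpairsPdep [a [b [ha hb ->]]]; move: ha hb; rewrite !mem_iota /= => ha hb.
split; lia.
Qed.

Lemma uniq_pairs k : uniq (pairs k).
Proof.
apply: allpairs_uniq_dep; first exact: iota_uniq.
  by move=> x _; exact: iota_uniq.
by move=> [a1 b1] [a2 b2] _ _ /= [-> ->].
Qed.

Lemma sumn_tri t s : sumn [seq (s + t) - i.+1 | i <- iota s t] = 'C(t, 2).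
Proof.
elim: t s => // t IH s /=; rewrite binS2 addnC; congr (_ + _); last lia.
by rewrite -(IH s.+1) addSnnS.
Qed.

Lemma size_pairs k : size (pairs k) = 'C(k, 2).
Proof.
rewrite size_allpairs_dep -(sumn_tri k 1); congr sumn; apply: eq_map => i /=.
by rewrite size_iota.
Qed.

Lemma count_pairs k b : b < k ->
  count (fun ij : nat * nat => (ij.1.-1 == b) || (ij.2.-1 == b)) (pairs k) <= k.-1.
Proof.
move=> bk; set Q := (fun ij : nat * nat => _).
set f := fun ij : nat * nat => if ij.1.-1 == b then ij.2 else ij.1.
rewrite -size_filter -(size_map f).
have -> : k.-1 = size (rem b.+1 (iota 1 k)) by rewrite size_rem ?size_iota // mem_iota; lia.
apply: uniq_leq_size.
  rewrite map_inj_in_uniq ?filter_uniq ?uniq_pairs //.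
  move=> [a1 b1] [a2 b2]; rewrite !mem_filter => /andP[q1 /mem_pairs [/= h1 h2 h3]].
  move=> /andP[q2 /mem_pairs [/= h4 h5 h6]]; move: q1 q2; rewrite /f /Q /=.
  case: (a1.-1 =P b) => e1; case: (a2.-1 =P b) => e2 /= q1 q2 e;
    try (move/eqP: q1 => q1); try (move/eqP: q2 => q2); congr pair; lia.
move=> y /mapP [[a1 b1]]; rewrite mem_filter => /andP[q1 /mem_pairs [/= h1 h2 h3]] ->.
rewrite mem_rem_uniq ?iota_uniq // inE mem_iota; move: q1; rewrite /f /Q /=.
case: (a1.-1 =P b) => e1 /= q1; try (move/eqP: q1 => q1); apply/andP; split; lia.
Qed.

Lemma column n k (s1 : seq bool) (enc : nat * nat -> seq bool) T :
  0 < n -> size s1 = n * k -> T + k.-1 <= 'C(k, 2) ->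
  (forall ij, ij \in pairs k -> size (enc ij) = n * k /\
     forall x, nth false (enc ij) x -> (x %/ n == ij.1.-1) || (x %/ n == ij.2.-1)) ->
  T * (n * k) <= \sum_(ij <- pairs k) hamming s1 (enc ij) + T * hamming s1 (nseq (n * k) true).
Proof.
move=> n0 hs1 hT henc.
rewrite (eq_big_seq (fun ij => \sum_(x < n * k) (nth false s1 x != nth false (enc ij) x))); last first.
  by move=> ij hij; rewrite hamming_sum hs1 // (proj1 (henc _ hij)).
rewrite hamming_sum ?size_nseq // hs1 exchange_big big_distrr -big_split /=.
rewrite mulnC -sum_const_ord; apply: leq_sum => x _.
case hb: (nth false s1 x); last by rewrite nth_nseq ltn_ord muln1 leq_addl.
rewrite nth_nseq ltn_ord muln0 addn0.
set a := (fun ij => nth false (enc ij) x).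
rewrite (sum_count _ (fun ij => ~~ a ij)).
have e : count a (pairs k) + count (fun ij => ~~ a ij) (pairs k) = size (pairs k) := count_predC a _.
have xk : x %/ n < k by rewrite ltn_divLR //; have := ltn_ord x; lia.
have c1 := count_pairs xk.
have c2 : count a (pairs k) <= count (fun ij : nat * nat => (ij.1.-1 == x %/ n) || (ij.2.-1 == x %/ n)) (pairs k).
  apply: count_sub_in => ij hij; rewrite /a => /(proj2 (henc _ hij)).
  by rewrite ![_ == x %/ n]eq_sym.
move: e; rewrite size_pairs; lia.
Qed.

Unset Implicit Arguments.
Theorem lemma6 (n k : nat) (E : seq (nat * nat)) (s : seq bool)
    (pc : nat -> nat -> nat) (pt : nat -> nat) :
  3 <= k ->
  simple_graph n E ->
  size s = Len n k ->
  (forall ij, ij \in pairs k ->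
     pc ij.1 ij.2 + Len n k <= size (choice_string n k E ij.1 ij.2)) ->
  (forall t, t < num_templates k -> pt t + Len n k <= size (template n k)) ->
  \sum_(ij <- pairs k)
      hamming s (substr (choice_string n k E ij.1 ij.2) (pc ij.1 ij.2) (Len n k))
  + \sum_(t < num_templates k)
      hamming s (substr (template n k) (pt t) (Len n k))
  <= dist_bound n k ->
  prefix (front_tag n k) s /\
  (forall ij, ij \in pairs k ->
     prefix (front_tag n k)
       (substr (choice_string n k E ij.1 ij.2) (pc ij.1 ij.2) (Len n k))) /\
  (forall t, t < num_templates k ->
     prefix (front_tag n k) (substr (template n k) (pt t) (Len n k))).
Proof.
move=> hk hG hs hpc hpt H.
case: (posnP n) => [n0|hn].
  subst n; have -> : front_tag 0 k = [::] by rewrite /front_tag mul0n.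
  by split; [|split] => *; apply: prefix0s.
have hE : all (valid_edge n) E by case/andP: hG.
have hC := bin2_ge k; have hC2 := bin2_le k.
have hTC : num_templates k + k.-1 = 'C(k, 2) by rewrite /num_templates; lia.
have T1 : 0 < num_templates k by lia.
have nk3 : 3 <= n * k by rewrite -(mul1n 3) leq_mul.
have NN : n * k ^ 3 = n * k * (k * k) by rewrite !expnS expn0 muln1 !mulnA.
have Tlt : num_templates k * (n * k) < n * k ^ 3 - n * k - 1.
  rewrite NN; move: (num_templates k) (n * k) hTC hC2 nk3 hk => T m; nia.
have hLe := Len_eq n k.
have L0 : 0 < Len n k by lia.
have tsub : forall t, t < num_templates k -> substr (template n k) (pt t) (Len n k) = template n k.
  move=> t ht; have := hpt t ht; rewrite size_template => h.
  have -> : pt t = 0 by lia.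
  by rewrite /substr drop0 take_oversize // size_template.
have St : \sum_(t < num_templates k) hamming s (substr (template n k) (pt t) (Len n k))
   = num_templates k * hamming s (template n k).
  rewrite -sum_const_ord; apply: eq_bigr => t _; by rewrite tsub.
move: H; rewrite St /dist_bound => H.
have al : forall ij, ij \in pairs k -> pc ij.1 ij.2 %% Len n k = 0.
  move=> ij hij; case/mem_pairs: (hij) => h1 h2 h3.
  apply/eqP; apply/negPn/negP => hne.
  have lb := align_lb hk h1 h2 h3 hE hn (hpc ij hij) hne.
  have sw : size (substr (choice_string n k E ij.1 ij.2) (pc ij.1 ij.2) (Len n k)) = Len n k.
    by rewrite /substr size_takel // size_drop; have := hpc ij hij; lia.
  have tri := hamming_tri (u := substr (choice_string n k E ij.1 ij.2) (pc ij.1 ij.2) (Len n k))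
     (v := s) (w := template n k) (etrans sw (esym hs)) (etrans hs (esym (size_template n k))).
  have le1 : hamming s (substr (choice_string n k E ij.1 ij.2) (pc ij.1 ij.2) (Len n k)) <=
     \sum_(ij <- pairs k)
      hamming s (substr (choice_string n k E ij.1 ij.2) (pc ij.1 ij.2) (Len n k)).
    by rewrite (big_rem ij) //= leq_addr.
  have : hamming s (template n k) <= num_templates k * hamming s (template n k) by rewrite leq_pmull.
  lia.
set q := fun ij : nat * nat => pc ij.1 ij.2 %/ Len n k.
set e := fun ij => nth (0,0) E (q ij).
have pe : forall ij, ij \in pairs k -> pc ij.1 ij.2 = q ij * Len n k.
  by move=> ij hij; rewrite {1}(divn_eq (pc _ _) (Len n k)) al // addn0.
have qE : forall ij, ij \in pairs k -> q ij < size E.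
  move=> ij hij; case/mem_pairs: (hij) => h1 h2 h3.
  have := hpc ij hij; rewrite pe // (size_c h1 h2 h3 hE) => h.
  by rewrite -(ltn_pmul2r L0); lia.
have subeq : forall ij, ij \in pairs k ->
    substr (choice_string n k E ij.1 ij.2) (pc ij.1 ij.2) (Len n k) = block n k ij.1 ij.2 (e ij).
  move=> ij hij; case/mem_pairs: (hij) => h1 h2 h3.
  by rewrite pe // (aligned h1 h2 h3 hE hn (qE _ hij)).
split; last split; last first.
- by move=> t ht; rewrite tsub // /template prefix_prefix.
- by move=> ij hij; rewrite subeq // /block prefix_prefix.
have hF := size_ft n k.
set s0 := take (size (front_tag n k)) s; set s1 := drop (size (front_tag n k)) s.
have hsF : s = s0 ++ s1 by rewrite cat_take_drop.
have ss0 : size s0 = size (front_tag n k) by rewrite size_takel // hs; lia.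
have ss1 : size s1 = n * k by rewrite size_drop hs; lia.
have ve : forall ij, ij \in pairs k -> valid_edge n (e ij).
  by move=> ij hij; apply: (allP hE); apply: mem_nth; apply: qE.
have Sc : \sum_(ij <- pairs k)
      hamming s (substr (choice_string n k E ij.1 ij.2) (pc ij.1 ij.2) (Len n k)) =
    \sum_(ij <- pairs k) (hamming s0 (front_tag n k) +
      hamming s1 (encode n k ij.1 ij.2 (e ij))).
  by apply: eq_big_seq => ij hij; rewrite subeq // {1}hsF /block hamming_cat.
move: H; rewrite Sc big_split sum_const_seq /= hsF /template hamming_cat // => H.
have col := column (enc := fun ij => encode n k ij.1 ij.2 (e ij)) (T := num_templates k) hn ss1.
have {}col : num_templates k * (n * k) <=
    \sum_(ij <- pairs k) hamming s1 (encode n k ij.1 ij.2 (e ij)) +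
    num_templates k * hamming s1 (nseq (n * k) true).
  apply: col; first lia.
  move=> ij hij; case/mem_pairs: (hij) => h1 h2 h3; split.
    by rewrite size_encode // ve.
  by move=> x; apply: nth_encode => //; apply: ve.
have h00 : num_templates k * hamming s0 (front_tag n k) = 0 by nia.
have h0 : hamming s0 (front_tag n k) = 0.
  by move/eqP: h00; rewrite muln_eq0 => /orP [/eqP|/eqP] //; lia.
by rewrite (hamming0 ss0 h0) prefix_prefix.
Qed.
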